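(* The sequence $(A;A^*;\{E_i\}_{i=0}^d;\{E^*_i\}_{i=0}^d)$ is a Leonard system if and only if both of the following hold: (i) there exists a decomposition of $V$ which is split with respect to the orderings $E_0,E_1,\ldots,E_d$ and $E^*_0,E^*_1,\ldots,E^*_d$; (ii) there exists a decomposition of $V$ which is split with respect to the orderings $E_d,E_{d-1},\ldots,E_0$ and $E^*_0,E^*_1,\ldots,E^*_d$.
   Context: Let $\mathbb K$ be a field, $d\ge 0$ an integer, and $\mathcal A$ a $\mathbb K$-algebra isomorphic to $\mathrm{Mat}_{d+1}(\mathbb K)$, with identity $I$. An element of $\mathcal A$ is multiplicity-free if it has $d+1$ mutually distinct eigenvalues, all in $\mathbb K$; for such $A$ with eigenvalues $\theta_0,\ldots,\theta_d$, the primitive idempotent associated with $\theta_i$ is $E_i=\prod_{j\ne i}(A-\theta_jI)/(\theta_i-\theta_j)$. Standing setup: $A,A^*$ are multiplicity-free elements of $\mathcal A$ ($A^*$ is just a name, not an adjoint); $E_0,\ldots,E_d$ is an ordering of the primitive idempotents of $A$ and $\theta_i$ is the eigenvalue of $A$ for $E_i$; $E^*_0,\ldots,E^*_d$ is an ordering of the primitive idempotents of $A^*$ and $\theta^*_i$ is the eigenvalue of $A^*$ for $E^*_i$; $V$ is an irreducible left $\mathcal A$-module. A decomposition of $V$ is a sequence $U_0,\ldots,U_d$ of 1-dimensional subspaces with $V=U_0+\cdots+U_d$ (direct sum). Given orderings $F_0,\ldots,F_d$ of the primitive idempotents of $A$ (with corresponding eigenvalues $\eta_i$) and $F^*_0,\ldots,F^*_d$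 of those of $A^*$ (eigenvalues $\eta^*_i$), a decomposition is split with respect to these orderings if $(A-\eta_iI)U_i=U_{i+1}$ for $0\le i\le d-1$, $(A-\eta_dI)U_d=0$, $(A^*-\eta^*_iI)U_i=U_{i-1}$ for $1\le i\le d$, and $(A^*-\eta^*_0I)U_0=0$. The sequence $(A;A^*;\{E_i\};\{E^*_i\})$ is a Leonard system if for all $0\le i,j\le d$: $E^*_iAE^*_j=0$ if $|i-j|>1$, $E^*_iAE^*_j\ne0$ if $|i-j|=1$, $E_iA^*E_j=0$ if $|i-j|>1$, and $E_iA^*E_j\ne0$ if $|i-j|=1$. *)

(* Defs.v *)
From HB Require Import structures.
From mathcomp Require Import all_boot all_order all_algebra.
Set Implicit Arguments. Unset Strict Implicit. Unset Printing Implicit Defensive.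
Import GRing.Theory.
Local Open Scope ring_scope.

(* The algebra is 'M[K]_(d.+1), V is the column-vector space 'cV[K]_(d.+1),
   acted on by left multiplication. *)

Definition mult_free (K : fieldType) (n : nat) (A : 'M[K]_n.+1)
  (th : 'I_n.+1 -> K) : Prop :=
  injective th /\ forall i, eigenvalue A (th i).

Definition prim_idem (K : fieldType) (n : nat) (A : 'M[K]_n.+1)
  (th : 'I_n.+1 -> K) (i : 'I_n.+1) : 'M[K]_n.+1 :=
  \prod_(j < n.+1 | j != i) ((th i - th j)^-1 *: (A - (th j)%:M)).

Definition actm (K : fieldType) (n : nat) (M : 'M[K]_n)
  : 'Hom('cV[K]_n, 'cV[K]_n) := linfun (mulmx M).

Definition decomposition (K : fieldType) (n : nat)
  (U : 'I_n.+1 -> {vspace 'cV[K]_n.+1}) : Prop :=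
  (forall i, \dim (U i) = 1%N) /\
  directv (\sum_i U i)%VS /\ (\sum_i U i)%VS = fullv.

(* Split w.r.t. orderings of idempotents whose eigenvalues are eta, etas. *)
Definition split_dec (K : fieldType) (n : nat) (A As : 'M[K]_n.+1)
  (eta etas : 'I_n.+1 -> K) (U : 'I_n.+1 -> {vspace 'cV[K]_n.+1}) : Prop :=
  decomposition U /\
  (forall i : 'I_n.+1, (i < n)%N ->
     (actm (A - (eta i)%:M) @: U i)%VS = U (inord i.+1)) /\
  (actm (A - (eta ord_max)%:M) @: U ord_max)%VS = 0%VS /\
  (forall i : 'I_n.+1, (0 < i)%N ->
     (actm (As - (etas i)%:M) @: U i)%VS = U (inord i.-1)) /\
  (actm (As - (etas ord0)%:M) @: U ord0)%VS = 0%VS.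

Definition leonard_system (K : fieldType) (n : nat) (A As : 'M[K]_n.+1)
  (E Es : 'I_n.+1 -> 'M[K]_n.+1) : Prop :=
  forall i j : 'I_n.+1,
    (((i.+1 < j)%N || (j.+1 < i)%N) -> Es i *m A *m Es j = 0) /\
    (((i.+1 == j) || (j.+1 == i)) -> Es i *m A *m Es j != 0) /\
    (((i.+1 < j)%N || (j.+1 < i)%N) -> E i *m As *m E j = 0) /\
    (((i.+1 == j) || (j.+1 == i)) -> E i *m As *m E j != 0).

(* Main.v *)
Require Import Defs.
From HB Require Import structures.
From mathcomp Require Import all_boot all_order all_algebra.
From mathcomp Require Import zify.
Set Implicit Arguments. Unset Strict Implicit. Unset Printing Implicit Defensive.
Import GRing.Theory.
Local Open Scope ring_scope.

Section Basics.
Variables (K : fieldType) (d : nat).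
Local Notation n := d.+1.
Implicit Types (M : 'M[K]_n) (t : 'I_n -> K).

Definition Lagr t (i : 'I_n) : {poly K} :=
  \prod_(j < n | j != i) ((t i - t j)^-1 *: ('X - (t j)%:P)).

Lemma prim_idemE M t i : prim_idem M t i = horner_mx M (Lagr t i).
Proof.
rewrite /prim_idem /Lagr rmorph_prod; apply: eq_bigr => j _.
by rewrite -[X in _ = X]/(horner_mx M ((t i - t j)^-1 *: (@GRing.add {poly K} (polyX K) (- (t j)%:P)))) horner_mxZ rmorphB /= horner_mx_X horner_mx_C.
Qed.

Lemma Lagr_eval t (Ht : injective t) i k : (Lagr t i).[t k] = (i == k)%:R.
Proof.
rewrite /Lagr horner_prod; case: eqP => [<-|/eqP ik].
  by apply: big1 => j ji; rewrite hornerZ hornerXsubC mulVf // subr_eq0; apply/eqP=> /Ht /eqP; rewrite eq_sym (negbTE ji).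
rewrite (bigD1 k) 1?eq_sym //= hornerZ hornerXsubC subrr mulr0 mul0r //.
Qed.

Lemma row_horner M (v : 'rV[K]_n) a p : v *m M = a *: v ->
  v *m horner_mx M p = p.[a] *: v.
Proof.
move=> vM; elim/poly_ind: p => [|p c IH].
  by rewrite rmorph0 mulmx0 horner0 scale0r.
rewrite rmorphD rmorphM /= horner_mx_X horner_mx_C mulmxDr mulmxA IH.
by rewrite -scalemxAl vM mul_mx_scalar scalerA hornerMXaddC scalerDl mulrC.
Qed.

Lemma horner_col M (E : 'M[K]_n) a p : M *m E = a *: E ->
  horner_mx M p *m E = p.[a] *: E.
Proof.
move=> ME; elim/poly_ind: p => [|p c IH].
  by rewrite rmorph0 mul0mx horner0 scale0r.
rewrite rmorphD rmorphM /= horner_mx_X horner_mx_C mulmxDl -mulmxA ME.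
by rewrite -scalemxAr IH scalerA hornerMXaddC mul_scalar_mx scalerDl mulrC.
Qed.

End Basics.

Section MF.
Variables (K : fieldType) (d : nat).
Local Notation n := d.+1.
Variables (M : 'M[K]_n) (t : 'I_n -> K).
Hypothesis (Ht : injective t) (Heig : forall i, eigenvalue M (t i)).

Local Notation E := (prim_idem M t).

Lemma ev_ex i : exists v : 'rV[K]_n, (v *m M == t i *: v) && (v != 0).
Proof. by case/eigenvalueP: (Heig i) => v vM vn0; exists v; rewrite vM eqxx. Qed.

Definition ev i := xchoose (ev_ex i).

Lemma evM i : ev i *m M = t i *: ev i.
Proof. by case/andP: (xchooseP (ev_ex i)) => /eqP. Qed.

Lemma ev_neq0 i : ev i != 0.
Proof. by case/andP: (xchooseP (ev_ex i)). Qed.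

Lemma evE i j : ev j *m E i = (i == j)%:R *: ev j.
Proof. by rewrite prim_idemE (row_horner _ (evM j)) Lagr_eval. Qed.

Definition Vm := \matrix_(i < n) ev i.

Lemma Vm_unit : Vm \in unitmx.
Proof.
rewrite unitmxE unitfE; apply/det0P => -[u un0 uV]; case/eqP: un0.
apply/rowP => j; rewrite mxE.
have : u *m Vm *m E j = 0 by rewrite uV mul0mx.
rewrite (mulmx_sum_row u) mulmx_suml (bigD1 j) //= big1 => [|k kj].
  by rewrite addr0 rowK -scalemxAl evE eqxx scale1r => /eqP; rewrite scaler_eq0 (negbTE (ev_neq0 j)) orbF => /eqP.
by rewrite rowK -scalemxAl evE eq_sym (negbTE kj) scale0r scaler0.
Qed.

Definition cE i := col i (invmx Vm).

Lemma E_factor i : E i = cE i *m ev i.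
Proof.
have VE : Vm *m E i = delta_mx i 0 *m ev i.
  apply/row_matrixP => a; rewrite !row_mul rowK evE.
  have -> : row a (delta_mx i 0 : 'M_(n,1)) = (((i == a)%:R : K)%:M : 'M[K]_1).
    by apply/rowP => z; rewrite !mxE ord1 eqxx andbT eq_sym.
  by rewrite mul_scalar_mx; case: eqP => [->|]; rewrite ?scale0r.
by rewrite -[E i]mul1mx -(mulVmx Vm_unit) -mulmxA VE mulmxA -colE.
Qed.

Lemma E_sum : \sum_i E i = 1%:M.
Proof.
rewrite -(mulVmx Vm_unit); apply/matrixP => a b.
rewrite summxE mxE; apply: eq_bigr => i _.
by rewrite E_factor !mxE big_ord1 !mxE.
Qed.

Lemma EM i : E i *m M = t i *: E i.
Proof. by rewrite E_factor -mulmxA evM scalemxAr. Qed.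

Lemma ME i : M *m E i = t i *: E i.
Proof.
have -> : M *m E i = E i *m M.
  by rewrite prim_idemE; apply: comm_mx_horner.
exact: EM.
Qed.

Lemma E_mul j i : E j *m E i = (j == i)%:R *: E i.
Proof. by rewrite {1}prim_idemE (horner_col _ (ME i)) Lagr_eval. Qed.

Lemma E_neq0 i : E i != 0.
Proof.
apply: contraNneq (ev_neq0 i) => Ei0.
by have := evE i i; rewrite eqxx scale1r Ei0 mulmx0 => ->.
Qed.

Lemma E_shift j c : E j *m (M - c%:M) = (t j - c) *: E j.
Proof. by rewrite mulmxBr EM mul_mx_scalar scalerBl. Qed.

Lemma E_rank1 i (N : 'M[K]_n) (y : 'cV[K]_n) :
  N *m E i != 0 -> E i *m y != 0 -> N *m (E i *m y) != 0.
Proof.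
rewrite !E_factor => NE Ey.
have [s Hs] : exists s, ev i *m y = s%:M by exists ((ev i *m y) 0 0); exact: mx11_scalar.
move: NE Ey; rewrite -!mulmxA Hs !mul_mx_scalar !mulmxA => NE Ey.
rewrite -scalemxAr scaler_eq0 negb_or.
move: Ey; rewrite scaler_eq0 negb_or => /andP[-> _] /=.
by apply: contraNneq NE => ->; rewrite mul0mx.
Qed.

End MF.

Lemma mx0_cols (K : fieldType) m (Z : 'M[K]_m) :
  (forall y : 'cV_m, Z *m y = 0) -> Z = 0.
Proof.
move=> H; apply/matrixP => a b.
by move: (H (delta_mx b 0)); rewrite -colE => /matrixP/(_ a 0); rewrite !mxE.
Qed.

Section Flag.
Variables (K : fieldType) (d : nat).
Local Notation n := d.+1.
Variables (X Y : 'M[K]_n) (t s : 'I_n -> K).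
Hypothesis (Ht : injective t) (Heig : forall i, eigenvalue X (t i)).
Variable U : 'I_n -> {vspace 'cV[K]_n}.
Hypothesis HUd : directv (\sum_i U i)%VS.
Hypothesis HUf : (\sum_i U i)%VS = fullv.
Hypothesis HX : forall k : 'I_n, (0 < k)%N -> forall u, u \in U k ->
  (X - (t k)%:M) *m u \in U (inord k.-1).
Hypothesis HX0 : forall u, u \in U ord0 -> (X - (t ord0)%:M) *m u = 0.
Hypothesis HY : forall k : 'I_n, (k < d)%N -> forall u, u \in U k ->
  (Y - (s k)%:M) *m u \in U (inord k.+1).
Hypothesis HYne : forall k : 'I_n, (k < d)%N ->
  exists2 u, u \in U k & (Y - (s k)%:M) *m u != 0.

Local Notation F := (prim_idem X t).

Definition W (i : nat) := (\sum_(k < n | (k <= i)%N) U k)%VS.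

Lemma U_W (k : 'I_n) i : (k <= i)%N -> (U k <= W i)%VS.
Proof. by move=> ki; apply: (sumv_sup k). Qed.

Lemma W_mono i j : (i <= j)%N -> (W i <= W j)%VS.
Proof. by move=> ij; apply/subv_sumP => k ki; apply: U_W; apply: leq_trans ij. Qed.

Lemma Fkill (j : 'I_n) c (u : 'cV[K]_n) : F j *m ((X - c%:M) *m u) = 0 -> t j != c -> F j *m u = 0.
Proof.
rewrite mulmxA (E_shift Ht Heig) -scalemxAl => /eqP; rewrite scaler_eq0 subr_eq0.
by case/orP => [/eqP->|/eqP->//]; rewrite eqxx.
Qed.

Lemma w1 m : forall (k : 'I_n), k = m :> nat -> forall u, u \in U k ->
  forall j : 'I_n, (k < j)%N -> F j *m u = 0.
Proof.
elim: m => [|m IH] k km u Hu j kj.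
  have k0 : k = ord0 by apply: val_inj.
  subst k; apply: (Fkill (c := t ord0)); first by rewrite HX0 // mulmx0.
  by apply/eqP => /Ht jk; move: kj; rewrite jk.
have kpos : (0 < k)%N by rewrite km.
have mn : (m < n)%N by apply: leq_trans (ltn_ord k); rewrite km.
apply: (Fkill (c := t k)); last by apply/eqP => /Ht jk; move: kj; rewrite jk ltnn.
apply: (IH (inord m)); first by rewrite inordK.
  by have := HX kpos Hu; rewrite km.
by rewrite inordK //; apply: leq_trans kj; rewrite km.
Qed.

Lemma w1W i u : u \in W i -> forall j : 'I_n, (i < j)%N -> F j *m u = 0.
Proof.
case/memv_sumP => us Hus -> j ij; rewrite mulmx_sumr big1 // => k kle.
by apply: (w1 (erefl _) (Hus k kle)); apply: leq_ltn_trans ij.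
Qed.

Lemma w2 i u : u \in W i -> X *m u \in W i.
Proof.
case/memv_sumP => us Hus ->; rewrite mulmx_sumr; apply: rpred_sum => k kle.
have Uk := Hus k kle.
have -> : X *m us k = (X - (t k)%:M) *m us k + t k *: us k.
  by rewrite mulmxBl mul_scalar_mx subrK.
apply: rpredD; last by apply: rpredZ; apply: (subvP (U_W kle)).
have [k0|kpos] := posnP k.
  have -> : k = ord0 by apply: val_inj.
  by rewrite HX0 ?rpred0 //; have -> : (ord0 : 'I_n) = k by apply: val_inj.
apply: (subvP (U_W _)) (HX kpos (Hus k kle)).
have km1 : (k.-1 < n)%N by apply: leq_ltn_trans (leq_pred _) (ltn_ord k).
by rewrite inordK //; apply: leq_trans (leq_pred _) kle.
Qed.

Lemma w3 i p : forall u, u \in W i -> horner_mx X p *m u \in W i.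
Proof.
elim/poly_ind: p => [|p c IH] u Hu; first by rewrite rmorph0 mul0mx rpred0.
rewrite rmorphD rmorphM /= horner_mx_X horner_mx_C mulmxDl -mulmxA mul_scalar_mx.
by apply: rpredD; [apply: IH; apply: w2 | apply: rpredZ].
Qed.

Lemma w4 (i : 'I_n) y : F i *m y \in W i.
Proof.
have : y \in (\sum_i U i)%VS by rewrite HUf memvf.
case/memv_sumP => us Hus ->; rewrite mulmx_sumr; apply: rpred_sum => k _.
move: (us k) (Hus k isT) => {Hus}u.
move: {2}(nat_of_ord k) (erefl (nat_of_ord k)) => m.
elim: m k u => [|m IH] k u km Hu.
  have ki : (k <= i)%N by rewrite km.
  by rewrite prim_idemE; apply: w3; apply: (subvP (U_W ki)).
case: (leqP k i) => [ki|ik].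
  by rewrite prim_idemE; apply: w3; apply: (subvP (U_W ki)).
have kpos : (0 < k)%N by rewrite km.
have mn : (m < n)%N by apply: leq_trans (ltn_ord k); rewrite km.
have -> : F i *m u = (t i - t k)^-1 *: (F i *m ((X - (t k)%:M) *m u)).
  rewrite mulmxA (E_shift Ht Heig) -scalemxAl scalerA mulVf ?scale1r //.
  by rewrite subr_eq0; apply/eqP => /Ht ik'; move: ik; rewrite ik' ltnn.
apply: rpredZ; apply: (IH (inord m)); first by rewrite inordK.
by have := HX kpos Hu; rewrite km.
Qed.

Lemma w5 i u : (i < d)%N -> u \in W i -> Y *m u \in W i.+1.
Proof.
move=> id; case/memv_sumP => us Hus ->; rewrite mulmx_sumr; apply: rpred_sum => k kle.
have Uk := Hus k kle.
have -> : Y *m us k = (Y - (s k)%:M) *m us k + s k *: us k.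
  by rewrite mulmxBl mul_scalar_mx subrK.
have kd : (k < d)%N by apply: leq_ltn_trans id.
apply: rpredD; last by apply: rpredZ; apply: (subvP (U_W (leq_trans kle (leqnSn _)))).
apply: (subvP (U_W _)) (HY kd Uk).
by rewrite inordK.
Qed.

Lemma G1 (i j : 'I_n) : (i.+1 < j)%N -> F j *m Y *m F i = 0.
Proof.
move=> ij; apply: mx0_cols => y; rewrite -!mulmxA.
have id : (i < d)%N by rewrite -ltnS; apply: leq_trans ij (ltnW (ltn_ord j)).
by apply: (w1W (w5 id (w4 i y))).
Qed.

Lemma G2 (i : 'I_n) : (i < d)%N -> F (inord i.+1) *m Y *m F i != 0.
Proof.
move=> id; apply/negP => /eqP H0.
have WY : forall w, w \in W i -> Y *m w \in W i.
  move=> w Hw; rewrite -[w]mul1mx -(E_sum Ht Heig) mulmx_suml mulmx_sumr.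
  apply: rpred_sum => k _.
  case: (leqP k i) => [kle|ilt]; last by rewrite (w1W Hw ilt) mulmx0 rpred0.
  rewrite -[Y *m _]mul1mx -(E_sum Ht Heig) mulmx_suml; apply: rpred_sum => j _.
  case: (leqP j i) => [jle|jlt].
    by apply: (subvP (W_mono jle)); apply: w4.
  case: (ltnP k.+1 j) => [kj|jk].
    by rewrite !mulmxA (G1 kj) !mul0mx rpred0.
  have kei : k = i by apply: val_inj; apply/eqP; rewrite eqn_leq kle -ltnS (leq_trans jlt jk).
  have jei : j = inord i.+1.
    by apply/eqP; rewrite -val_eqE /= inordK ?ltnS // eqn_leq jlt andbT -kei.
  by rewrite kei jei !mulmxA H0 !mul0mx rpred0.
have [u Hu Hne] := HYne id.
have zW : (Y - (s i)%:M) *m u \in W i.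
  have uW : u \in W i by apply: (subvP (U_W (leqnn i))).
  by rewrite mulmxBl mul_scalar_mx; apply: rpredB; [apply: WY | apply: rpredZ].
have zU := HY id Hu.
move/directv_sumP: HUd => /(_ (inord i.+1) isT) cap0.
have : (Y - (s i)%:M) *m u \in (U (inord i.+1) :&: \sum_(j | true && (j != inord i.+1)) U j)%VS.
  rewrite memv_cap zU; apply: (subvP _ _ zW); apply/subv_sumP => k kle.
  apply: (sumv_sup k) => //; apply/negP; rewrite -val_eqE /= inordK ?ltnS //.
  by move=> /eqP ke; move: kle; rewrite ke ltnn.
by rewrite cap0 memv0 (negbTE Hne).
Qed.

End Flag.

Section Sym.
Variables (K : fieldType) (d : nat).
Local Notation n := d.+1.
Variables (A Z : 'M[K]_n) (t : 'I_n -> K).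
Hypothesis (Ht : injective t) (Heig : forall i, eigenvalue A (t i)).
Local Notation E := (prim_idem A t).
Local Notation f := (ev Heig).
Local Notation c := (cE Heig).
Hypothesis tri0 : forall i j : 'I_n, ((i.+1 < j)%N || (j.+1 < i)%N) -> E i *m Z *m E j = 0.
Hypothesis trine : forall i j : 'I_n, ((i.+1 == j) || (j.+1 == i)) -> E i *m Z *m E j != 0.

Definition tcoef (i j : 'I_n) := (f i *m Z *m c j) 0 0.

Lemma fE i j : f i *m E j = (j == i)%:R *: f i.
Proof. exact: evE. Qed.

Lemma fZE i j : f i *m Z *m E j = tcoef i j *: f j.
Proof. by rewrite (E_factor Ht Heig j) mulmxA [f i *m Z *m c j]mx11_scalar mul_scalar_mx. Qed.

Lemma fZ i : f i *m Z = \sum_j tcoef i j *: f j.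
Proof.
by rewrite -[f i *m Z]mulmx1 -(E_sum Ht Heig) mulmx_sumr; apply: eq_bigr => j _; rewrite fZE.
Qed.

Lemma tt0 (i j : 'I_n) : ((i.+1 < j)%N || (j.+1 < i)%N) -> tcoef i j = 0.
Proof.
move=> ij; have := fZE i j.
have -> : f i *m Z *m E j = f i *m (E i *m Z *m E j).
  by rewrite !mulmxA fE eqxx scale1r.
rewrite tri0 // mulmx0 => /esym/eqP; rewrite scaler_eq0 (negbTE (ev_neq0 _ _)) orbF.
by move/eqP.
Qed.

Lemma ttne (i j : 'I_n) : ((i.+1 == j) || (j.+1 == i)) -> tcoef i j != 0.
Proof.
move=> ij; apply: contraNneq (trine ij) => t0.
have -> : E i *m Z *m E j = c i *m (f i *m Z *m E j).
  by rewrite (E_factor Ht Heig i) !mulmxA.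
by rewrite fZE t0 scale0r mulmx0.
Qed.

Fixpoint wt (k : nat) : K :=
  match k with
  | 0 => 1
  | k'.+1 => wt k' * tcoef (inord k') (inord k'.+1) / tcoef (inord k'.+1) (inord k')
  end.

Lemma wt_neq0 k : (k < n)%N -> wt k != 0.
Proof.
elim: k => [|k IH] kn /=; first exact: oner_neq0.
have kn' : (k < n)%N by apply: ltnW.
rewrite mulf_neq0 ?invr_eq0 ?mulf_neq0 ?IH //; apply: ttne; rewrite !inordK //.
  by rewrite eqxx.
by rewrite eqxx orbT.
Qed.

Lemma wt_step (i j : 'I_n) : j = i.+1 :> nat -> wt i * tcoef i j = wt j * tcoef j i.
Proof.
move=> ji; rewrite ji /=.
have -> : inord i = i by rewrite inord_val.
have -> : inord i.+1 = j by apply: val_inj; rewrite /= inordK // -ji.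
rewrite divfK //; apply: ttne; rewrite ji eqxx orbT //.
Qed.

Lemma wt_sym (i j : 'I_n) : wt i * tcoef i j = wt j * tcoef j i.
Proof.
have [H|] := boolP ((i.+1 < j) || (j.+1 < i))%N.
  by rewrite !tt0 ?mulr0 // orbC.
rewrite negb_or -!leqNgt => /andP[ji ij].
case: (ltngtP i j) => [lt|gt|/val_inj->//].
  by apply: wt_step; apply/eqP; rewrite eqn_leq ji lt.
by apply/esym/wt_step; apply/eqP; rewrite eqn_leq ij gt.
Qed.

Definition Gm := \sum_(i < n) wt i *: ((f i)^T *m f i).

Lemma Gm_tr : Gm^T = Gm.
Proof.
rewrite /Gm linear_sum; apply: eq_bigr => i _.
by rewrite linearZ /= trmx_mul trmxK.
Qed.

Lemma Gm_A : A^T *m Gm = Gm *m A.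
Proof.
rewrite /Gm mulmx_sumr mulmx_suml; apply: eq_bigr => i _.
rewrite -scalemxAr -scalemxAl; congr (_ *: _); rewrite mulmxA -trmx_mul -mulmxA (evM Heig) linearZ /=.
by rewrite -scalemxAl -scalemxAr.
Qed.

Lemma Gm_Z : Z^T *m Gm = Gm *m Z.
Proof.
rewrite /Gm mulmx_sumr mulmx_suml.
under eq_bigr => i _ do rewrite -scalemxAr mulmxA -trmx_mul fZ linear_sum mulmx_suml scaler_sumr.
under [RHS]eq_bigr => i _ do rewrite -scalemxAl -mulmxA fZ mulmx_sumr scaler_sumr.
rewrite exchange_big /=; apply: eq_bigr => i _; apply: eq_bigr => j _.
rewrite linearZ /= -scalemxAl -scalemxAr !scalerA.
by rewrite wt_sym.
Qed.

Lemma outer0 (u r : 'rV[K]_n) : u != 0 -> u^T *m r = 0 -> r = 0.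
Proof.
move=> un0 ur; have [a ua] : exists a, u 0 a != 0.
  apply/existsP; apply: contraNT un0 => /existsPn H.
  by apply/eqP/rowP => a; rewrite mxE; apply/eqP; have := H a; rewrite negbK.
apply/rowP => b; move/matrixP: ur => /(_ a b); rewrite !mxE big_ord1 !mxE.
by move/eqP; rewrite mulf_eq0 (negbTE ua) /= => /eqP->.
Qed.

Lemma Gm_inj (Y : 'M[K]_n) : Gm *m Y = 0 -> Y = 0.
Proof.
move=> GY.
have EG : forall j, (E j)^T *m Gm = wt j *: ((f j)^T *m f j).
  move=> j; rewrite /Gm mulmx_sumr (bigD1 j) //= big1 => [|i ij].
    by rewrite addr0 -scalemxAr mulmxA -trmx_mul fE eqxx scale1r.
  by rewrite -scalemxAr mulmxA -trmx_mul fE eq_sym (negbTE ij) scale0r trmx0 mul0mx scaler0.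
have fY : forall j, f j *m Y = 0.
  move=> j; apply: (outer0 (ev_neq0 Heig j)).
  have : (E j)^T *m Gm *m Y = 0 by rewrite -mulmxA GY mulmx0.
  rewrite EG -scalemxAl => /eqP; rewrite scaler_eq0 (negbTE (wt_neq0 (ltn_ord j))) /=.
  by rewrite mulmxA => /eqP.
rewrite -[Y]mul1mx -(E_sum Ht Heig) mulmx_suml big1 // => j _.
by rewrite (E_factor Ht Heig j) -mulmxA fY mulmx0.
Qed.

Lemma Gm_poly p : (horner_mx Z p)^T *m Gm = Gm *m horner_mx Z p.
Proof.
elim/poly_ind: p => [|p a IH]; first by rewrite rmorph0 trmx0 mul0mx mulmx0.
rewrite rmorphD rmorphM /= horner_mx_X horner_mx_C.
have HC : comm_mx Z (horner_mx Z p) by apply: comm_mx_horner.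
have -> : horner_mx Z p * Z = Z *m horner_mx Z p by rewrite HC.
rewrite linearD /= trmx_mul mulmxDl mulmxDr -mulmxA Gm_Z (mulmxA (horner_mx Z p)^T) IH -!mulmxA -HC.
by rewrite tr_scalar_mx mul_scalar_mx mul_mx_scalar.
Qed.

Lemma sym_zero p q :
  horner_mx Z p *m A *m horner_mx Z q = 0 -> horner_mx Z q *m A *m horner_mx Z p = 0.
Proof.
move=> H0; apply: Gm_inj.
have : (horner_mx Z p *m A *m horner_mx Z q)^T *m Gm = 0 by rewrite H0 trmx0 mul0mx.
by rewrite !trmx_mul -!mulmxA Gm_poly (mulmxA A^T) Gm_A -mulmxA (mulmxA _ Gm) Gm_poly !mulmxA.
Qed.

End Sym.

Section Tri.
Variables (K : fieldType) (d : nat).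
Local Notation n := d.+1.
Variables (P : 'I_n -> 'M[K]_n) (b : 'I_n -> 'cV[K]_n) (a : 'I_n -> K).
Hypothesis Pbne : forall j, P j *m b j != 0.

Lemma sum_single (j : 'I_n) : (forall k, k != j -> a k *: (P j *m b k) = 0) ->
  P j *m (\sum_k a k *: b k) = a j *: (P j *m b j).
Proof.
move=> H; rewrite mulmx_sumr (bigD1 j) //= big1 ?addr0 => [|k kj]; first by rewrite -scalemxAr.
by rewrite -scalemxAr H.
Qed.

Lemma scal_zero (j : 'I_n) : a j *: (P j *m b j) = 0 -> a j = 0.
Proof. by move/eqP; rewrite scaler_eq0 (negbTE (Pbne j)) orbF => /eqP. Qed.

Lemma tri_down m0 : (forall j k : 'I_n, (k < j)%N -> P j *m b k = 0) ->
  (forall j : 'I_n, (m0 <= j)%N -> P j *m (\sum_k a k *: b k) = 0) ->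
  forall j : 'I_n, (m0 <= j)%N -> a j = 0.
Proof.
move=> Hlow Hz.
suff H : forall r (j : 'I_n), (d - j <= r)%N -> (m0 <= j)%N -> a j = 0.
  by move=> j; apply: (H d); rewrite leq_subr.
elim=> [|r IH] j jr mj; apply: scal_zero; rewrite -sum_single ?Hz // => k kj.
  case: (ltngtP k j) => [kj'|jk|/val_inj ke]; last by rewrite ke eqxx in kj.
    by rewrite Hlow // scaler0.
  have jd : (j < d)%N by apply: leq_trans jk _; rewrite -ltnS.
  by move: jr; rewrite leqn0 subn_eq0 leqNgt jd.
case: (ltngtP k j) => [kj'|jk|/val_inj ke]; last by rewrite ke eqxx in kj.
  by rewrite Hlow // scaler0.
rewrite IH ?scale0r //; last by apply: leq_trans mj (ltnW jk).
have kn := ltn_ord k.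
lia.
Qed.

Lemma tri_up m0 : (forall j k : 'I_n, (j < k)%N -> P j *m b k = 0) ->
  (forall j : 'I_n, (j < m0)%N -> P j *m (\sum_k a k *: b k) = 0) ->
  forall j : 'I_n, (j < m0)%N -> a j = 0.
Proof.
move=> Hup Hz.
suff H : forall r (j : 'I_n), (j <= r)%N -> (j < m0)%N -> a j = 0.
  by move=> j; apply: (H j).
elim=> [|r IH] j jr mj; apply: scal_zero; rewrite -sum_single ?Hz // => k kj.
  case: (ltngtP k j) => [kj'|jk|/val_inj ke]; last by rewrite ke eqxx in kj.
    by move: jr; rewrite leqn0 => /eqP j0; rewrite j0 in kj'.
  by rewrite Hup // scaler0.
case: (ltngtP k j) => [kj'|jk|/val_inj ke]; last by rewrite ke eqxx in kj.
  rewrite IH ?scale0r //; last by apply: ltn_trans mj.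
  by rewrite -ltnS; apply: leq_trans jr.
by rewrite Hup // scaler0.
Qed.

End Tri.

Section Cons.
Variables (K : fieldType) (d : nat).
Local Notation n := d.+1.
Variables (A As : 'M[K]_n) (th ths : 'I_n -> K).
Hypothesis (Ht : injective th) (Heig : forall i, eigenvalue A (th i)).
Hypothesis (Hts : injective ths) (Heigs : forall i, eigenvalue As (ths i)).
Local Notation E := (prim_idem A th).
Local Notation Es := (prim_idem As ths).
Hypothesis HEs0 : forall i j : 'I_n, (j.+1 < i)%N -> Es i *m A *m Es j = 0.
Hypothesis HEsne : forall i : 'I_n, (i < d)%N -> Es (inord i.+1) *m A *m Es i != 0.
Hypothesis HE0 : forall i j : 'I_n, (i.+1 < j)%N -> E i *m As *m E j = 0.
Hypothesis HEne : forall i : 'I_n, (0 < i)%N -> E (inord i.-1) *m As *m E i != 0.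
Variable x : 'cV[K]_n.
Hypothesis Hx0 : Es ord0 *m x = x.
Hypothesis Hxne : x != 0.

Fixpoint vec (k : nat) : 'cV[K]_n :=
  if k is k'.+1 then (A - (th (inord k'))%:M) *m vec k' else x.

Lemma c1 (i : 'I_n) k : E i *m vec k = (\prod_(l < k) (th i - th (inord l))) *: (E i *m x).
Proof.
elim: k => [|k IH] /=; first by rewrite big_ord0 scale1r.
by rewrite mulmxA (E_shift Ht Heig) -scalemxAl IH scalerA big_ord_recr /= mulrC.
Qed.

Lemma c1z (i : 'I_n) k : (i < k)%N -> E i *m vec k = 0.
Proof.
move=> ik; rewrite c1 (bigD1 (Ordinal ik)) //= inord_val subrr mul0r scale0r //.
Qed.

Lemma c2 k : forall j : 'I_n, (k < j)%N -> Es j *m vec k = 0.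
Proof.
elim: k => [|k IH] j kj /=.
  rewrite -Hx0 mulmxA (E_mul Hts Heigs).
  have -> : (j == ord0) = false by apply/negbTE; apply: contraTneq kj => ->.
  by rewrite scale0r mul0mx.
rewrite mulmxA mulmxBr mulmxBl mul_mx_scalar -scalemxAl IH ?(ltn_trans (ltnSn k)) // scaler0 subr0.
rewrite -[vec k]mul1mx -(E_sum Hts Heigs) mulmx_suml mulmx_sumr.
rewrite big1 // => l _.
case: (leqP l k) => [lk|kl]; last by rewrite IH // mulmx0.
by rewrite !mulmxA HEs0 ?mul0mx //; apply: leq_ltn_trans kj.
Qed.

Lemma c3 k : (k < n)%N -> Es (inord k) *m vec k != 0.
Proof.
elim: k => [|k IH] kn /=.
  have -> : inord 0 = (ord0 : 'I_n) by apply: val_inj; rewrite /= inordK.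
  by rewrite Hx0.
have kn' : (k < n)%N by apply: ltnW.
rewrite mulmxA mulmxBr mulmxBl mul_mx_scalar -scalemxAl c2 ?inordK // scaler0 subr0.
rewrite -[vec k]mul1mx -(E_sum Hts Heigs) mulmx_suml mulmx_sumr (bigD1 (inord k)) //=.
rewrite big1 ?addr0 => [|l lk].
  have kd : ((inord k : 'I_n) < d)%N by rewrite inordK.
  have := HEsne kd; rewrite inordK // => H.
  by apply: (E_rank1 Hts Heigs) => //; apply: IH.
case: (ltngtP l k) => [lk'|kl|le]; last first.
- by move: lk; rewrite -val_eqE /= inordK // le eqxx.
- by rewrite -mulmxA c2 // !mulmx0.
- by rewrite !mulmxA HEs0 ?mul0mx // inordK.
Qed.

Definition vt := [tuple vec i | i < n].

Lemma vt_nth (i : 'I_n) : vt`_i = vec i.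
Proof. by rewrite nth_mktuple. Qed.

Lemma vt_free : free vt.
Proof.
apply/freeP => a Ha i.
have Pb : forall j : 'I_n, Es j *m vec j != 0.
  by move=> j; have := c3 (ltn_ord j); rewrite inord_val.
have Hl : forall j k : 'I_n, (k < j)%N -> Es j *m vec k = 0.
  by move=> j k kj; apply: c2.
have Hz : forall j : 'I_n, (0 <= j)%N -> Es j *m (\sum_k a k *: vec k) = 0.
  by move=> j _; under eq_bigr => k _ do rewrite -vt_nth; rewrite Ha mulmx0.
exact: (@tri_down K d Es (fun k : 'I_n => vec k) a Pb 0 Hl Hz i).
Qed.

Lemma vt_span : <<vt>>%VS = fullv.
Proof.
apply/eqP; rewrite eqEdim subvf /=.
have := vt_free; rewrite /free => /eqP ->.
by rewrite size_tuple dimvf /dim /= muln1.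
Qed.

Lemma vt_coord y : y = \sum_(i < n) coord vt i y *: vec i.
Proof.
have yin : y \in <<vt>>%VS by rewrite vt_span memvf.
by rewrite {1}(coord_span yin); apply: eq_bigr => i _; rewrite vt_nth.
Qed.

Lemma c5 (k : 'I_n) : E k *m x != 0.
Proof.
apply/negP => /eqP Ek0.
have : E k = 0.
  apply: mx0_cols => y; rewrite [y]vt_coord mulmx_sumr big1 // => i _.
  by rewrite -scalemxAr c1 Ek0 !scaler0.
by move/eqP; rewrite (negbTE (E_neq0 Ht Heig k)).
Qed.

Lemma c1nz (i : 'I_n) : E i *m vec i != 0.
Proof.
rewrite c1 scaler_eq0 negb_or c5 andbT; apply/prodf_neq0 => l _.
rewrite subr_eq0; apply/eqP => /Ht /(congr1 val) /=.
rewrite inordK ?(ltn_trans (ltn_ord l)) // => il.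
by have := ltn_ord l; rewrite -il ltnn.
Qed.

Lemma vec_ne (i : 'I_n) : vec i != 0.
Proof. by apply: contraNneq (c1nz i) => ->; rewrite mulmx0. Qed.

Lemma vec_last : vec n = 0.
Proof.
rewrite -[vec n]mul1mx -(E_sum Ht Heig) mulmx_suml big1 // => k _.
by apply: c1z.
Qed.

Lemma lowering (i : 'I_n) : (0 < i)%N ->
  exists2 al, al != 0 & (As - (ths i)%:M) *m vec i = al *: vec i.-1.
Proof.
move=> ipos.
set z := (As - (ths i)%:M) *m vec i.
pose a := fun k => coord vt k z.
have zc : z = \sum_k a k *: vec k by exact: vt_coord.
have im1 : (i.-1 < n)%N by apply: leq_ltn_trans (leq_pred _) (ltn_ord i).
have Hdown : forall j : 'I_n, (i <= j)%N -> a j = 0.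
  have Pb : forall j : 'I_n, Es j *m vec j != 0.
    by move=> j; have := c3 (ltn_ord j); rewrite inord_val.
  have Hl : forall j k : 'I_n, (k < j)%N -> Es j *m vec k = 0.
    by move=> j k kj; apply: c2.
  have Hz : forall j : 'I_n, (i <= j)%N -> Es j *m (\sum_k a k *: vec k) = 0.
    move=> j ij; rewrite -zc /z mulmxA (E_shift Hts Heigs) -scalemxAl.
    have [->|jne] := eqVneq j i; first by rewrite subrr scale0r.
    rewrite c2 ?scaler0 //; rewrite ltn_neqAle ij andbT.
    by apply: contra jne => /eqP ji; apply/eqP/val_inj.
  exact: (@tri_down K d Es (fun k : 'I_n => vec k) a Pb i Hl Hz).
have Hup : forall j : 'I_n, (j < i.-1)%N -> a j = 0.
  have Pb : forall j : 'I_n, E j *m vec j != 0 by move=> j; apply: c1nz.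
  have Hl : forall j k : 'I_n, (j < k)%N -> E j *m vec k = 0.
    by move=> j k jk; apply: c1z.
  have Hz : forall j : 'I_n, (j < i.-1)%N -> E j *m (\sum_k a k *: vec k) = 0.
    move=> j ji; rewrite -zc /z mulmxA mulmxBr mulmxBl mul_mx_scalar -scalemxAl.
    have ji' : (j < i)%N by apply: leq_trans ji (leq_pred _).
    rewrite c1z // scaler0 subr0.
    rewrite -[vec i]mul1mx -(E_sum Ht Heig) mulmx_suml mulmx_sumr big1 // => l _.
    case: (ltnP l i) => [li|il]; first by rewrite c1z // mulmx0.
    rewrite !mulmxA HE0 ?mul0mx //; apply: leq_trans il.
    by move: ji; case: (i : nat) ipos => // i' _; rewrite /=.
  exact: (@tri_up K d E (fun k : 'I_n => vec k) a Pb i.-1 Hl Hz).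
have zE : z = a (inord i.-1) *: vec i.-1.
  rewrite zc (bigD1 (inord i.-1)) //= big1 ?addr0 ?inordK // => k kne.
  case: (ltngtP k i.-1) => [kl|kg|ke].
  - by rewrite Hup // scale0r.
  - rewrite Hdown ?scale0r //.
    by move: kg; case: (i : nat) ipos => // i' _ /=.
  - by move: kne; rewrite -val_eqE /= inordK // ke eqxx.
exists (a (inord i.-1)) => //.
apply: contraNneq (c1nz (inord i.-1)) => a0.
have : E (inord i.-1) *m z = 0 by rewrite zE a0 scale0r mulmx0.
rewrite /z mulmxA mulmxBr mulmxBl mul_mx_scalar -scalemxAl.
have lt1 : ((inord i.-1 : 'I_n) < i)%N by rewrite inordK // prednK.
rewrite (c1z lt1) scaler0 subr0.
rewrite -[vec i]mul1mx -(E_sum Ht Heig) mulmx_suml mulmx_sumr (bigD1 i) //= big1 ?addr0.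
  move=> H; exfalso; move: H; apply/eqP.
  by rewrite mulmxA -mulmxA; apply: (E_rank1 Ht Heig); [apply: HEne | apply: c1nz].
move=> l li.
case: (ltngtP l i) => [lt|gt|le]; first by rewrite c1z // mulmx0.
  by rewrite !mulmxA HE0 ?mul0mx // inordK // prednK.
by move: li; rewrite -val_eqE /= le eqxx.
Qed.

Definition Uc (i : 'I_n) : {vspace 'cV[K]_n} := <[vec i]>%VS.

Lemma line_scale (v : 'cV[K]_n) (al : K) : al != 0 -> <[al *: v]>%VS = <[v]>%VS.
Proof.
move=> al0; apply/eqP; rewrite eqEdim -memvE rpredZ ?memv_line //=.
by rewrite !dim_vline scaler_eq0 (negbTE al0).
Qed.

Lemma line0 : <[0 : 'cV[K]_n]>%VS = 0%VS.
Proof. by apply/eqP; rewrite -dimv_eq0 dim_vline eqxx. Qed.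

Lemma actmE (N : 'M[K]_n) (v : 'cV[K]_n) : actm N v = N *m v.
Proof. by rewrite /actm lfunE. Qed.

Lemma sumU : (\sum_i Uc i)%VS = (\sum_(v <- vt) <[v]>)%VS.
Proof. by rewrite big_tuple; apply: eq_bigr => i _; rewrite tnth_mktuple. Qed.

Lemma cons_split : split_dec A As th ths Uc.
Proof.
split; [|split; [|split; [|split]]].
- split; first by move=> i; rewrite /Uc dim_vline vec_ne.
  split.
    apply/directv_sum_independent => us Hus Hsum i _.
    have ex : forall j, exists k, us j == k *: vec j.
      by move=> j; case/vlineP: (Hus j isT) => k ->; exists k.
    pose k j := xchoose (ex j).
    have usk : forall j, us j = k j *: vec j by move=> j; apply/eqP; exact: xchooseP (ex j).
    have : forall j, k j = 0.
      apply/(freeP vt_free) => //.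
      by rewrite -[RHS]Hsum; apply: eq_bigr => j _; rewrite vt_nth usk.
    by move=> k0; rewrite usk k0 scale0r.
  by rewrite sumU -span_def vt_span.
- move=> i id; rewrite /Uc limg_line actmE inordK //=.
  by rewrite inord_val.
- rewrite /Uc limg_line actmE.
  have -> : (ord_max : 'I_n) = inord d by apply: val_inj; rewrite /= inordK.
  by rewrite inordK // -/(vec d.+1) vec_last line0.
- move=> i ipos; rewrite /Uc limg_line actmE.
  have [al al0 ->] := lowering ipos.
  by rewrite line_scale // inordK // (leq_ltn_trans (leq_pred _) (ltn_ord i)).
  rewrite /Uc limg_line actmE /= -Hx0 mulmxA mulmxBl (ME Hts Heigs) mul_scalar_mx.
  by rewrite subrr mul0mx line0.
Qed.

End Cons.

Section Rev.
Variables (K : fieldType) (d : nat).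
Local Notation n := d.+1.

Lemma prim_idem_ext (M : 'M[K]_n) (t t' : 'I_n -> K) i : t =1 t' -> prim_idem M t i = prim_idem M t' i.
Proof. by move=> tt'; apply: eq_bigr => j _; rewrite !tt'. Qed.

Lemma prim_idem_rev (M : 'M[K]_n) (t : 'I_n -> K) i :
  prim_idem M (fun k => t (rev_ord k)) i = prim_idem M t (rev_ord i).
Proof.
rewrite !prim_idemE /Lagr (reindex_inj rev_ord_inj) /=.
apply: congr1; apply: eq_big => [j|j _]; first by rewrite -[in LHS](rev_ordK i) (inj_eq rev_ord_inj).
by rewrite rev_ordK.
Qed.

Lemma mult_free_rev (M : 'M[K]_n) (t : 'I_n -> K) :
  mult_free M t -> mult_free M (fun k => t (rev_ord k)).
Proof. by case=> Ht He; split => // i j /Ht; apply: rev_ord_inj. Qed.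

Lemma dim1_line (U : {vspace 'cV[K]_n}) : \dim U = 1%N -> U = <[vpick U]>%VS.
Proof.
move=> U1; apply/eqP; rewrite eq_sym eqEdim -memvE memv_pick /= U1 dim_vline.
by rewrite vpick0 -dimv_eq0 U1.
Qed.

Lemma img_split (N : 'M[K]_n) (U U' : {vspace 'cV[K]_n}) :
  (actm N @: U)%VS = U' -> forall u, u \in U -> N *m u \in U'.
Proof. by move=> <- u Hu; rewrite -actmE; apply: memv_img. Qed.

Lemma img_ne (N : 'M[K]_n) (U U' : {vspace 'cV[K]_n}) :
  \dim U = 1%N -> \dim U' = 1%N -> (actm N @: U)%VS = U' ->
  exists2 u, u \in U & N *m u != 0.
Proof.
move=> U1 U'1 HU; exists (vpick U); first exact: memv_pick.
move: HU; rewrite {1}(dim1_line U1) limg_line actmE => HU.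
by apply/eqP => H0; move: U'1; rewrite -HU H0 line0 dimv0.
Qed.

Lemma directv_rev (U : 'I_n -> {vspace 'cV[K]_n}) :
  directv (\sum_i U i)%VS -> directv (\sum_i U (rev_ord i))%VS.
Proof.
move/directv_sum_independent => H; apply/directv_sum_independent => us Hus Hs i _.
have H' := H (fun j => us (rev_ord j)).
have := H' _ _ (rev_ord i) isT; rewrite rev_ordK; apply.
  by move=> j _; have := Hus (rev_ord j) isT; rewrite rev_ordK.
by rewrite -[RHS]Hs [RHS](reindex_inj rev_ord_inj).
Qed.

Lemma sum_rev (U : 'I_n -> {vspace 'cV[K]_n}) :
  (\sum_i U (rev_ord i))%VS = (\sum_i U i)%VS.
Proof. by rewrite [RHS](reindex_inj rev_ord_inj). Qed.

End Rev.

Section SplitG.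
Variables (K : fieldType) (d : nat).
Local Notation n := d.+1.
Variables (A As : 'M[K]_n).

Lemma splitG_low (th ths : 'I_n -> K) U : mult_free As ths -> split_dec A As th ths U ->
  (forall i j : 'I_n, (i.+1 < j)%N -> prim_idem As ths j *m A *m prim_idem As ths i = 0) /\
  (forall i : 'I_n, (i < d)%N -> prim_idem As ths (inord i.+1) *m A *m prim_idem As ths i != 0).
Proof.
case=> Hts Heigs [[Hdim [Hd Hf]] [Hup [Hlast [Hdown H0]]]].
have HX : forall k : 'I_n, (0 < k)%N -> forall u, u \in U k ->
    (As - (ths k)%:M) *m u \in U (inord k.-1).
  by move=> k kpos u Hu; apply: (img_split (Hdown k kpos)).
have HX0 : forall u, u \in U ord0 -> (As - (ths ord0)%:M) *m u = 0.
  by move=> u Hu; apply/eqP; rewrite -memv0; apply: (img_split H0).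
have HY : forall k : 'I_n, (k < d)%N -> forall u, u \in U k ->
    (A - (th k)%:M) *m u \in U (inord k.+1).
  by move=> k kd u Hu; apply: (img_split (Hup k kd)).
have HYne : forall k : 'I_n, (k < d)%N ->
    exists2 u, u \in U k & (A - (th k)%:M) *m u != 0.
  by move=> k kd; apply: (img_ne (Hdim k) (Hdim _) (Hup k kd)).
split; first by move=> i j ij; exact: (G1 Hts Heigs Hf HX HX0 HY ij).
by move=> i id; exact: (G2 Hts Heigs Hd Hf HX HX0 HY HYne id).
Qed.

Lemma splitG_up (eta etas : 'I_n -> K) U : mult_free A eta -> split_dec A As eta etas U ->
  (forall a b : 'I_n, (a.+1 < b)%N -> prim_idem A eta a *m As *m prim_idem A eta b = 0) /\
  (forall b : 'I_n, (0 < b)%N -> prim_idem A eta (inord b.-1) *m As *m prim_idem A eta b != 0).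
Proof.
move=> Hmf; case: (mult_free_rev Hmf) => Ht Heig.
case=> [[Hdim [Hd Hf]] [Hup [Hlast [Hdown H0]]]].
pose U' := fun k => U (rev_ord k).
have HX : forall k : 'I_n, (0 < k)%N -> forall u, u \in U' k ->
    (A - (eta (rev_ord k))%:M) *m u \in U' (inord k.-1).
  move=> k kpos u Hu.
  have kd : ((rev_ord k : 'I_n) < d)%N by rewrite /=; have := ltn_ord k; lia.
  have := img_split (Hup _ kd) Hu.
  have -> : (inord (rev_ord k).+1 : 'I_n) = rev_ord (inord k.-1).
    by apply: val_inj; rewrite /= !inordK /=; have := ltn_ord k; lia.
  by [].
have HX0 : forall u, u \in U' ord0 -> (A - (eta (rev_ord ord0))%:M) *m u = 0.
  move=> u Hu; have e : rev_ord (ord0 : 'I_n) = ord_max by apply: val_inj; rewrite /= subn1.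
  rewrite /U' e in Hu; apply/eqP; rewrite -memv0 e; exact: (img_split Hlast Hu).
have HY : forall k : 'I_n, (k < d)%N -> forall u, u \in U' k ->
    (As - (etas (rev_ord k))%:M) *m u \in U' (inord k.+1).
  move=> k kd u Hu.
  have kp : (0 < (rev_ord k : 'I_n))%N by rewrite /=; lia.
  have := img_split (Hdown _ kp) Hu.
  have -> : (inord (rev_ord k).-1 : 'I_n) = rev_ord (inord k.+1).
    by apply: val_inj; rewrite /= !inordK /=; lia.
  by [].
have HYne : forall k : 'I_n, (k < d)%N ->
    exists2 u, u \in U' k & (As - (etas (rev_ord k))%:M) *m u != 0.
  move=> k kd.
  have kp : (0 < (rev_ord k : 'I_n))%N by rewrite /=; lia.
  exact: (img_ne (Hdim _) (Hdim _) (Hdown _ kp)).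
have HUd : directv (\sum_i U' i)%VS by apply: directv_rev.
have HUf : (\sum_i U' i)%VS = fullv by rewrite /U' sum_rev.
split.
  move=> a b ab.
  have ij : ((rev_ord b).+1 < rev_ord a)%N by rewrite /=; have := ltn_ord b; lia.
  have := G1 Ht Heig HUf HX HX0 HY ij.
  by rewrite !prim_idem_rev !rev_ordK.
move=> b bpos.
have id : ((rev_ord b : 'I_n) < d)%N by rewrite /=; have := ltn_ord b; lia.
have := G2 Ht Heig HUd HUf HX HX0 HY HYne id.
rewrite !prim_idem_rev !rev_ordK.
have -> : rev_ord (inord (rev_ord b).+1) = (inord b.-1 : 'I_n).
  by apply: val_inj; rewrite /= !inordK /=; have := ltn_ord b; lia.
by [].
Qed.

End SplitG.

Theorem theorem5p1 (K : fieldType) (d : nat) (A As : 'M[K]_d.+1)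
  (th ths : 'I_d.+1 -> K) :
  mult_free A th -> mult_free As ths ->
  leonard_system A As (prim_idem A th) (prim_idem As ths) <->
  ((exists U, split_dec A As th ths U) /\
   (exists U, split_dec A As (fun i => th (rev_ord i)) ths U)).
Proof.
move=> Hmf Hmfs; have [Ht Heig] := Hmf; have [Hts Heigs] := Hmfs.
have Hmf' := mult_free_rev Hmf; have [Ht' Heig'] := Hmf'.
split.
- move=> LS.
  have HEs0 : forall i j : 'I_d.+1, (j.+1 < i)%N ->
      prim_idem As ths i *m A *m prim_idem As ths j = 0.
    by move=> i j ji; case: (LS i j) => H1 _; apply: H1; rewrite ji orbT.
  have HEsne : forall i : 'I_d.+1, (i < d)%N ->
      prim_idem As ths (inord i.+1) *m A *m prim_idem As ths i != 0.
    move=> i id; case: (LS (inord i.+1) i) => _ [H2 _]; apply: H2.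
    by rewrite inordK // eqxx orbT.
  have HE0 : forall i j : 'I_d.+1, (i.+1 < j)%N ->
      prim_idem A th i *m As *m prim_idem A th j = 0.
    by move=> i j ij; case: (LS i j) => _ [_ [H3 _]]; apply: H3; rewrite ij.
  have HEne : forall i : 'I_d.+1, (0 < i)%N ->
      prim_idem A th (inord i.-1) *m As *m prim_idem A th i != 0.
    move=> i ip; case: (LS (inord i.-1) i) => _ [_ [_ H4]]; apply: H4.
    rewrite inordK ?prednK ?eqxx //.
    by have := ltn_ord i; lia.
  have : [exists j : 'I_d.+1, prim_idem As ths ord0 *m (delta_mx j 0 : 'cV[K]_d.+1) != 0].
    case: (boolP [exists j : 'I_d.+1, prim_idem As ths ord0 *m (delta_mx j 0 : 'cV[K]_d.+1) != 0]) => // /existsPn H.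
    have : prim_idem As ths ord0 = 0.
      apply/matrixP => a b; have := H b; rewrite negbK -colE => /eqP/matrixP/(_ a 0).
      by rewrite !mxE.
    by move/eqP; rewrite (negbTE (E_neq0 Hts Heigs ord0)).
  case/existsP => j Hj.
  set x := prim_idem As ths ord0 *m (delta_mx j 0 : 'cV[K]_d.+1).
  have Hx0 : prim_idem As ths ord0 *m x = x.
    by rewrite /x mulmxA (E_mul Hts Heigs) eqxx scale1r.
  split; first by exists (Uc A th x); exact: (cons_split Ht Heig Hts Heigs HEs0 HEsne HE0 HEne Hx0 Hj).
  exists (Uc A (fun i => th (rev_ord i)) x).
  apply: (cons_split Ht' Heig' Hts Heigs HEs0 HEsne _ _ Hx0 Hj).
    move=> i k ik; rewrite !prim_idem_rev.
    case: (LS (rev_ord i) (rev_ord k)) => _ [_ [H3 _]]; apply: H3.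
    by apply/orP; right; rewrite /=; have := ltn_ord k; lia.
  move=> i ip; rewrite !prim_idem_rev.
  case: (LS (rev_ord (inord i.-1)) (rev_ord i)) => _ [_ [_ H4]]; apply: H4.
  apply/orP; right; rewrite /= inordK; last by have := ltn_ord i; lia.
  by apply/eqP; have := ltn_ord i; lia.
- case=> [[U1 HS1] [U2 HS2]].
  have [Lz Lne] := splitG_low Hmfs HS1.
  have [Uz1 Une1] := splitG_up Hmf HS1.
  have [Uz2 Une2] := splitG_up Hmf' HS2.
  have tri0 : forall i j : 'I_d.+1, ((i.+1 < j)%N || (j.+1 < i)%N) ->
      prim_idem A th i *m As *m prim_idem A th j = 0.
    move=> i j /orP[ij|ji]; first exact: Uz1.
    have h : ((rev_ord i).+1 < rev_ord j)%N by rewrite /=; have := ltn_ord i; lia.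
    by have := Uz2 _ _ h; rewrite !prim_idem_rev !rev_ordK.
  have trine : forall i j : 'I_d.+1, ((i.+1 == j) || (j.+1 == i)) ->
      prim_idem A th i *m As *m prim_idem A th j != 0.
    move=> i j /orP[/eqP ij|/eqP ji].
      have jp : (0 < j)%N by rewrite -ij.
      have := Une1 j jp.
      have -> : (inord j.-1 : 'I_d.+1) = i by apply: val_inj; rewrite /= inordK -ij //=; lia.
      by [].
    have jp : (0 < rev_ord j)%N by rewrite /=; have := ltn_ord i; lia.
    have := Une2 _ jp; rewrite !prim_idem_rev !rev_ordK.
    have -> : rev_ord (inord (rev_ord j).-1) = i.
      by apply: val_inj; rewrite /= inordK /=; have := ltn_ord i; lia.
    by [].
  have symE : forall a b : 'I_d.+1,
      prim_idem As ths a *m A *m prim_idem As ths b = 0 ->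
      prim_idem As ths b *m A *m prim_idem As ths a = 0.
    by move=> a b; rewrite !prim_idemE; apply: (sym_zero Ht Heig tri0 trine).
  move=> i j; split; [|split; [|split]].
  + case/orP=> [ij|ji]; last exact: Lz.
    by apply: symE; apply: Lz.
  + case/orP=> [/eqP ij|/eqP ji].
      have id : (i < d)%N by have := ltn_ord j; lia.
      apply/negP => /eqP H0; have := Lne i id.
      have -> : (inord i.+1 : 'I_d.+1) = j by apply: val_inj; rewrite /= inordK -?ij.
      by rewrite (symE _ _ H0) eqxx.
    have jd : (j < d)%N by have := ltn_ord i; lia.
    have := Lne j jd.
    have -> : (inord j.+1 : 'I_d.+1) = i by apply: val_inj; rewrite /= inordK -?ji.
    by [].
  + exact: tri0.
  + exact: trine.
Qed.
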